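(* There exist an absolute constant $c>0$, a calibrated distribution $\mathcal D$ of $(p,y)\in[0,1]\times\{0,1\}$, and a decision task $Z=(A,U)$ with $U:A\times\{0,1\}\to[0,1]$ such that for every positive integer $T$ and every randomized response function $r:[0,1]\to\Delta(A)$, if $S$ is the uniform distribution on $T$ i.i.d. data points drawn from $\mathcal D$, then with probability at least $1/3$ over $S$, $\mathsf{SR}_Z(r,S)\ge c\,T^{-1/2}$.
   Context: A distribution of $(p,y)$ is calibrated if $\mathbb E[y\mid p]=p$. A decision task $Z=(A,U)$ consists of an action set $A$ and a utility function $U:A\times\{0,1\}\to[0,1]$. For a randomized response function $r:[0,1]\to\Delta(A)$ and a distribution $\mathcal D$ on $[0,1]\times\{0,1\}$, the swap regret is $\mathsf{SR}_Z(r,\mathcal D)=\sup_{\sigma:A\to A}\mathbb E_{(p,y)\sim\mathcal D,\,a\sim r(p)}[U(\sigma(a),y)-U(a,y)]$. *)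

(* Defs.v *)
From HB Require Import structures.
From mathcomp Require Import all_boot all_order all_algebra.
From mathcomp Require Import reals.
Set Implicit Arguments. Unset Strict Implicit. Unset Printing Implicit Defensive.
Import Order.TTheory GRing.Theory Num.Theory.
Local Open Scope ring_scope.

(* A finitely supported distribution on [0,1] x {0,1}:
   atoms fd_pt i = (p_i, y_i) with weights fd_w i. *)
Record findist (R : realType) := FinDist {
  fd_n : nat;
  fd_pt : 'I_fd_n -> R * bool;
  fd_w : 'I_fd_n -> R }.
Arguments fd_n {R}. Arguments fd_pt {R}. Arguments fd_w {R}.

Definition is_dist (R : realType) (D : findist R) : Prop :=
  (forall i, 0 <= fd_w D i) /\ \sum_i fd_w D i = 1 /\
  (forall i, 0 <= (fd_pt D i).1 <= 1).

(* E[y | p = q] = q for every q (trivial when q has zero mass). *)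
Definition calibrated (R : realType) (D : findist R) : Prop :=
  forall q : R,
    \sum_(i | (fd_pt D i).1 == q) fd_w D i * ((fd_pt D i).2)%:R
    = q * \sum_(i | (fd_pt D i).1 == q) fd_w D i.

Definition is_pvec (R : realType) (A : finType) (v : {ffun A -> R}) : Prop :=
  (forall a, 0 <= v a) /\ \sum_a v a = 1.

Definition swap_regret (R : realType) (A : finType) (U : A -> bool -> R)
    (r : R -> {ffun A -> R}) (T : nat) (s : 'I_T -> R * bool) : R :=
  \big[Num.max/0]_(sigma : {ffun A -> A})
    ((T%:R)^-1 * \sum_(t < T) \sum_(a : A)
        r (s t).1 a * (U (sigma a) (s t).2 - U a (s t).2)).

Definition sample_prob (R : realType) (D : findist R) (T : nat)
    (E : ('I_T -> R * bool) -> bool) : R :=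
  \sum_(k : {ffun 'I_T -> 'I_(fd_n D)})
     (\prod_(t < T) fd_w D (k t)) * (E (fun t => fd_pt D (k t)))%:R.
Arguments sample_prob {R} D T E.
Arguments swap_regret {R A} U r {T} s.

(* Main.v *)
Require Import Defs.
From HB Require Import structures.
From mathcomp Require Import all_boot all_order all_algebra.
From mathcomp Require Import reals.
Import Order.TTheory GRing.Theory Num.Theory.
From mathcomp Require Import zify ring lra.
Lemma ind_win (lo K N : nat) : \sum_(j < N) ((lo <= j) && (j < lo + K) : nat) = minn N (lo+K) - minn N lo.
Proof.
elim: N => [|N IH].
  rewrite big_ord0. lia.
rewrite big_ord_recr /= IH.
have [h1|h1] := leqP lo N; have [h2|h2] := ltnP N (lo+K); rewrite /=; lia.
Qed.
Lemma binstep n j : (j.*2 < n)%N -> ('C(n, j) <= 'C(n, j.+1))%N.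
Proof.
move=> h. have := mul_bin_left n j.
move=> e. have : (j.+1 * 'C(n,j) <= j.+1 * 'C(n, j.+1))%N by rewrite e; apply: leq_mul => //; lia.
by rewrite leq_pmul2l.
Qed.
Lemma binmax n j : ('C(n, j) <= 'C(n, n./2))%N.
Proof.
wlog hj : j / (j <= n./2)%N.
  move=> W. case: (leqP j n./2) => h; first exact: W.
  case: (leqP j n) => h2; last by rewrite bin_small.
  rewrite -bin_sub //; apply: W. lia.
have [k ek] : exists k, n./2 = j + k by exists (n./2 - j); lia.
elim: k j hj ek => [|k IH] j hj ek; first by rewrite ek addn0.
apply: leq_trans (IH j.+1 _ _); [apply: binstep|lia|lia]. lia.
Qed.
Lemma cbin_rec m : ('C(m.+1.*2, m.+1) * m.+1 = 2 * m.*2.+1 * 'C(m.*2, m))%N.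
Proof.
have h1 := mul_bin_down m.*2.+1 m.
have h2 := mul_bin_diag m.+1.*2 m.
rewrite /= in h1 h2.
have e : (m.+1.*2 = (m.*2.+1).+1)%N by lia.
rewrite e in h2 *.
have e2 : (m.*2.+1 - m = m.+1)%N by lia.
rewrite e2 in h1.
apply/eqP; rewrite -(eqn_pmul2l (ltn0Sn m)); apply/eqP.
move: h1 h2. set a := 'C(_, m). set c := 'C(_, m). set b := 'C(_, m.+1).
move=> h1 h2.
have -> : (m.+1 * (b * m.+1) = (m.+1 * b) * m.+1)%N by ring.
rewrite -h2. have -> : (m.*2.+2 = 2 * m.+1)%N by lia.
have -> : (2 * m.+1 * c * m.+1 = 2 * m.+1 * (m.+1 * c))%N by ring.
rewrite -h1. ring.
Qed.
Lemma central m : ('C(m.*2, m) ^ 2 * (3 * m + 1) <= 16 ^ m)%N.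
Proof.
elim: m => [|m IH]; first by [].
have r := cbin_rec m.
move: IH r. set a := 'C(m.*2, m). set b := 'C(m.+1.*2, m.+1). move=> IH r.
have h3 : (4 * (m.*2.+1)^2 * (3 * m + 4) <= 16 * ((m.+1)^2 * (3 * m + 1)))%N.
  have -> : (4 * (m.*2.+1)^2 * (3 * m + 4) = 48 * m^3 + 112 * m^2 + 76 * m + 16)%N.
    rewrite -!mul2n. ring.
  have -> : (16 * ((m.+1)^2 * (3 * m + 1)) = 48 * m^3 + 112 * m^2 + 80 * m + 16)%N.
    ring.
  lia.
have e : (b ^ 2 * (3 * m.+1 + 1) * ((m.+1)^2 * (3 * m + 1)) = 4 * (m.*2.+1)^2 * (3 * m + 4) * (a^2 * (3 * m + 1)))%N.
  have e1 : ((b * m.+1)^2 = (2 * m.*2.+1 * a)^2)%N by rewrite r.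
  have -> : (b ^ 2 * (3 * m.+1 + 1) * ((m.+1)^2 * (3 * m + 1)) = (b * m.+1)^2 * (3 * m + 4) * (3 * m + 1))%N.
    have -> : (3 * m.+1 + 1 = 3 * m + 4)%N by lia. ring.
  rewrite e1. ring.
have h : (b ^ 2 * (3 * m.+1 + 1) * ((m.+1)^2 * (3 * m + 1)) <= 16 ^ m.+1 * ((m.+1)^2 * (3 * m + 1)))%N.
  rewrite e. apply: leq_trans (leq_mul (leqnn _) IH) _.
  have -> : (16 ^ m.+1 * ((m.+1)^2 * (3 * m + 1)) = 16 * ((m.+1)^2 * (3 * m + 1)) * 16 ^ m)%N by rewrite expnS; ring.
  exact: leq_mul h3 (leqnn _).
have hp : (0 < (m.+1)^2 * (3 * m + 1))%N by rewrite muln_gt0 expn_gt0 addn1.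
by rewrite leq_pmul2r // in h.
Qed.

Lemma sumbin T : (\sum_(j < T.+1) 'C(T,j) = 2 ^ T)%N.
Proof.
have := expnDn 1 1 T. rewrite addn1 => ->.
by apply: eq_bigr => i _; rewrite !exp1n !muln1.
Qed.

Lemma symsum T (F : nat -> nat) :
  (\sum_(j < T.+1) 'C(T,j) * F (T - j) = \sum_(j < T.+1) 'C(T,j) * F j)%N.
Proof.
rewrite (reindex_inj rev_ord_inj) /=.
apply: eq_bigr => j _.
have hj : (j <= T)%N by have := ltn_ord j; lia.
have -> : (T.+1 - j.+1 = T - j)%N by lia.
have -> : (T - (T - j) = j)%N by lia.
by rewrite bin_sub.
Qed.

Lemma win T K : (0 < K)%N ->
  (\sum_(j < T.+1) 'C(T,j) * ((T < j.*2 + K) && (j.*2 < T + K)) <= K * 'C(T, T./2))%N.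
Proof.
move=> K0.
set lo := ((T + 1 - K) %/ 2)%N.
apply: (@leq_trans (\sum_(j < T.+1) 'C(T, T./2) * ((lo <= j) && (j < lo + K))))%N.
  apply: leq_sum => j _.
  case h: ((T < j.*2 + K) && (j.*2 < T + K)); last by rewrite muln0.
  move/andP: h => [h1 h2].
  have -> : ((lo <= j) && (j < lo + K)) = true.
    apply/andP; split; rewrite /lo; lia.
  by rewrite !muln1 binmax.
rewrite -big_distrr /= ind_win mulnC leq_mul2r; apply/orP; right.
lia.
Qed.

Lemma cmax_even m : ('C(m.*2, m) ^ 2 * (3 * m + 1) <= 4 ^ (m.*2))%N.
Proof. have -> : (4 ^ m.*2 = 16 ^ m)%N by rewrite -mul2n expnM. exact: central. Qed.

Lemma cmax_odd m : ('C(m.*2.+1, m) ^ 2 * (3 * m + 1) <= 4 ^ (m.*2.+1))%N.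
Proof.
have h := mul_bin_down m.*2.+1 m. rewrite /= in h.
have e : (m.*2.+1 - m = m.+1)%N by lia. rewrite e in h.
have hC : ('C(m.*2.+1, m) <= 2 * 'C(m.*2, m))%N.
  have : (m.+1 * 'C(m.*2.+1, m) <= m.+1 * (2 * 'C(m.*2, m)))%N.
    rewrite -h. have -> : (m.+1 * (2 * 'C(m.*2, m)) = (m.*2.+2) * 'C(m.*2, m))%N by rewrite -mul2n; ring.
    by rewrite leq_mul2r leqnSn orbT.
  by rewrite leq_pmul2l.
apply: (@leq_trans ((2 * 'C(m.*2, m)) ^ 2 * (3 * m + 1))).
  by rewrite leq_mul2r leq_sqr hC orbT.
rewrite expnMn -mulnA. have -> : (4 ^ m.*2.+1 = 2^2 * 4 ^ m.*2)%N by rewrite expnS. apply: leq_mul => //. exact: cmax_even.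
Qed.

Lemma cmax_bound T : ('C(T, T./2) ^ 2 * (3 * T./2 + 1) <= 4 ^ T)%N.
Proof.
have hT := odd_double_half T.
set m := T./2 in hT *. clearbody m.
case: (odd T) hT => /= <-.
- rewrite add1n. exact: cmax_odd.
- rewrite add0n. exact: cmax_even.
Qed.

Lemma mainprob T K : (0 < T)%N -> T != 2%N -> T != 4%N -> (0 < K)%N ->
  (100 * (K - 1) ^ 2 <= T)%N -> ((T < 100)%N -> K = 1%N) ->
  (2 ^ T <= 3 * \sum_(j < T.+1) 'C(T,j) * (T + K <= j.*2))%N.
Proof.
move=> T0 T2 T4 K0 hK hK1.
set SA := (\sum_(j < T.+1) 'C(T,j) * (T + K <= j.*2))%N.
set SB := (\sum_(j < T.+1) 'C(T,j) * (j.*2 + K <= T))%N.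
set SW := (\sum_(j < T.+1) 'C(T,j) * ((T < j.*2 + K) && (j.*2 < T + K)))%N.
have hpart : (SA + SB + SW = 2 ^ T)%N.
  rewrite -sumbin /SA /SB /SW -!big_split /=. apply: eq_bigr => j _.
  rewrite -!mulnDr.
  have [h1|h1] := boolP (T + K <= j.*2); have [h2|h2] := boolP (j.*2 + K <= T);
  have [h3|h3] := boolP (T < j.*2 + K); have [h4|h4] := boolP (j.*2 < T + K); rewrite /=; lia.
have hsym : SB = SA.
  rewrite /SA -(symsum T (fun j => (T + K <= j.*2) : nat)) /SB. apply: eq_bigr => j _ /=.
  have hj : (j <= T)%N by have := ltn_ord j; lia.
  congr (_ * nat_of_bool _)%N. apply/idP/idP; lia.
have hW : (3 * SW <= 2 ^ T)%N.
  case hodd: (odd T && (T < 100)%N).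
    move/andP: hodd => [ho hl].
    have -> : SW = 0%N.
      rewrite /SW (hK1 hl). apply: big1 => j _.
      have -> : ((T < j.*2 + 1) && (j.*2 < T + 1)) = false.
        apply/negP => /andP [a b]. have : T = j.*2 by lia.
        by move=> e; move: ho; rewrite e odd_double.
      by rewrite muln0.
    by [].
  have hm : (9 * K ^ 2 <= 3 * T./2 + 1)%N.
    move: hodd. have := odd_double_half T.
    case: (odd T) => /= hT.
    + move=> hl. have hl' : (100 <= T)%N by rewrite leqNgt -[(T < 100)%N]negbK hl.
      set d := (K - 1)%N in hK. have eK : K = d.+1 by rewrite /d; lia.
      rewrite eK. have hd : (d <= d ^ 2)%N by case: d {eK hK} => // d; rewrite expnS leq_pmulr.
      lia.
    + move=> _. case: (ltnP T 100) => hl.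
      * rewrite (hK1 hl). have : (T./2 >= 3)%N.
          have : T <> 2%N by apply/eqP. have : T <> 4%N by apply/eqP. lia.
        lia.
      * set d := (K - 1)%N in hK. have eK : K = d.+1 by rewrite /d; lia.
        rewrite eK. have hd : (d <= d ^ 2)%N by case: d {eK hK} => // d; rewrite expnS leq_pmulr.
        lia.
  have hw := @win T K K0.
  apply: leq_trans (leq_mul (leqnn 3) hw) _.
  rewrite -leq_sqr.
  have -> : ((2 ^ T) ^ 2 = 4 ^ T)%N by rewrite -expnM mulnC expnM.
  apply: leq_trans (cmax_bound T).
  rewrite !expnMn. have := leq_mul hm (leqnn ('C(T, T./2) ^ 2)).
  have -> : (3 ^ 2 = 9)%N by [].
  move: ('C(T, T./2) ^ 2) (K ^ 2) => x y. move=> h. apply: leq_trans _ (leq_trans h _); rewrite leq_eqVlt; apply/orP; left; apply/eqP; ring.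
lia.
Qed.

Lemma halfprob T : (2 ^ T <= 2 * \sum_(j < T.+1) 'C(T,j) * (T <= j.*2))%N.
Proof.
have h : (2 ^ T <= \sum_(j < T.+1) 'C(T,j) * (T <= j.*2) + \sum_(j < T.+1) 'C(T,j) * (T <= (T - j).*2))%N.
  rewrite -sumbin -big_split /=. apply: leq_sum => j _.
  rewrite -mulnDr. have hj : (j <= T)%N by have := ltn_ord j; lia.
  have [h1|h1] := boolP (T <= j.*2); have [h2|h2] := boolP (T <= (T - j).*2); rewrite /=.
  - lia.
  - lia.
  - lia.
  - rewrite -ltnNge in h1. rewrite -ltnNge in h2. lia.
rewrite (symsum T (fun j => (T <= j.*2)%N : nat)) in h. lia.
Qed.

Lemma p1prob T K : (0 < T)%N -> (0 < K)%N ->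
  (100 * (K - 1) ^ 2 <= T)%N -> ((T < 100)%N -> K = 1%N) ->
  (2 ^ T <= 3 * \sum_(j < T.+1) 'C(T,j) * ((T + K <= j.*2) || ((4 * j <= T) && (T <= 4))))%N.
Proof.
move=> T0 K0 hK hK1.
case: (eqVneq T 2) => [eT|T2].
  rewrite eT in hK1 *. rewrite (hK1 isT). by rewrite !big_ord_recr big_ord0 /=.
case: (eqVneq T 4) => [eT|T4].
  rewrite eT in hK1 *. rewrite (hK1 isT). by rewrite !big_ord_recr big_ord0 /=.
apply: leq_trans (@mainprob T K T0 T2 T4 K0 hK hK1) _.
rewrite leq_mul2l; apply/orP; right. apply: leq_sum => j _.
apply: leq_mul => //. by case: (T + K <= j.*2).
Qed.

Local Open Scope ring_scope.
Section S.
Variable R : realType.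

Definition cnt T (k : {ffun 'I_T -> 'I_2}) : nat := (\sum_(t < T) (val (k t) == 1%N))%N.
Arguments cnt {T}.

Lemma sum_sets T (F : nat -> R) : \sum_(B : {set 'I_T}) F #|B| = \sum_(j < T.+1) ('C(T,j))%:R * F j.
Proof.
rewrite (partition_big (fun B : {set 'I_T} => (inord #|B| : 'I_T.+1)) predT) //=.
apply: eq_bigr => j _.
have hB : forall B : {set 'I_T}, (#|B| <= T)%N by move=> B; have := max_card (mem B); rewrite card_ord.
rewrite (eq_bigl (fun B : {set 'I_T} => B \in [set B : {set 'I_T} | #|B| == j])); last first.
  move=> B; rewrite inE /=. apply/eqP/eqP => [<-|e]; first by rewrite inordK // ltnS.
  by apply: val_inj; rewrite /= inordK ?e // ltnS.
rewrite (eq_bigr (fun _ => F j)); last by move=> B; rewrite inE => /eqP ->.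
by rewrite sumr_const card_draws card_ord mulr_natl.
Qed.

Lemma sum_cnt T (F : nat -> R) :
  \sum_(k : {ffun 'I_T -> 'I_2}) F (cnt k) = \sum_(j < T.+1) ('C(T,j))%:R * F j.
Proof.
rewrite -sum_sets.
pose h (B : {set 'I_T}) : {ffun 'I_T -> 'I_2} := [ffun t => if t \in B then ord_max else ord0].
pose g (k : {ffun 'I_T -> 'I_2}) : {set 'I_T} := [set t | k t == ord_max].
have hg : cancel h g.
  move=> B; apply/setP => t; rewrite inE ffunE. by case: (t \in B).
have gh : cancel g h.
  move=> k; apply/ffunP => t; rewrite ffunE inE.
  case: eqP => [->//|]. case: (k t) => [[|[|//]]] //= p ne. 
  by apply: val_inj.
  by exfalso; apply: ne; apply: val_inj.
rewrite (reindex h); last by exists g => x _; [apply: hg|apply: gh].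
apply: eq_bigr => B _. congr F.
rewrite /cnt. rewrite (eq_bigr (fun t => (t \in B) : nat)); last first.
  by move=> t _; rewrite ffunE; case: (t \in B).
by rewrite -big_mkcond /= sum1_card.
Qed.

Definition Dd : findist R := @FinDist R 2 (fun i : 'I_2 => ((2:R)^-1, val i == 1%N)) (fun _ => (2:R)^-1).
Definition vv (a : 'I_4) : R := (2 * a%:R + 5) / 16.
Definition UU (a : 'I_4) (y : bool) : R := (2 * vv a * y%:R - vv a ^+ 2 + 1/2) / 2.

Lemma regret_ge T (r : R -> {ffun 'I_4 -> R}) (k : {ffun 'I_T -> 'I_2}) (a b : 'I_4) :
  (T%:R)^-1 * (r (2^-1) a * ((vv b - vv a) * (2 * (cnt k)%:R - T%:R * (vv a + vv b)) / 2))
  <= swap_regret UU r (fun t => fd_pt Dd (k t)).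
Proof.
rewrite /swap_regret.
apply: le_trans (le_bigmax _ _ [ffun x => if x == a then b else x]).
rewrite /=. rewrite le_eqVlt; apply/orP; left; apply/eqP. congr (_ * _).
rewrite (eq_bigr (fun t => r (2^-1) a * (UU b (val (k t) == 1%N) - UU a (val (k t) == 1%N)))); last first.
  move=> t _. rewrite (bigD1 a) //= ffunE eqxx big1 ?addr0 //.
  by move=> x /negbTE hx; rewrite ffunE hx subrr mulr0.
rewrite -mulr_sumr. congr (_ * _).
rewrite (eq_bigr (fun t => (vv b - vv a) / 2 * (2 * ((val (k t) == 1%N) : nat)%:R - (vv a + vv b)))); last first.
  move=> t _. rewrite /UU. ring.
rewrite -mulr_sumr sumrB -mulr_sumr /cnt natr_sum sumr_const card_ord.
rewrite mulr_natl. ring.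
Qed.

Lemma sp_ge T (E : ('I_T -> R * bool) -> bool) (P : pred nat) :
  (forall k : {ffun 'I_T -> 'I_2}, P (cnt k) -> E (fun t => fd_pt Dd (k t))) ->
  ((2:R)^-1) ^+ T * \sum_(j < T.+1) ('C(T,j))%:R * (P j)%:R <= sample_prob Dd T E.
Proof.
move=> hPE. rewrite /sample_prob -(sum_cnt T (fun j => (P j)%:R)) mulr_sumr.
apply: ler_sum => k _.
rewrite prodr_const card_ord /=.
apply: ler_wpM2l; first by apply: exprn_ge0; rewrite invr_ge0.
case h: (P (cnt k)); last by [].
by rewrite (hPE k h).
Qed.

Lemma conv T (P : pred nat) : (2 ^ T <= 3 * \sum_(j < T.+1) 'C(T,j) * P j)%N ->
  1/3 <= ((2:R)^-1) ^+ T * \sum_(j < T.+1) ('C(T,j))%:R * (P j)%:R.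
Proof.
rewrite -(ler_nat R) natrM natrX natr_sum => h.
rewrite (eq_bigr (fun j : 'I_T.+1 => ('C(T, j) * P j)%N%:R)); last by move=> j _; rewrite natrM.
set S := \sum_(i < T.+1) _ in h *.
have h2 : 0 < (2:R) ^+ T by apply: exprn_gt0.
rewrite exprVn [X in _ <= X]mulrC ler_pdivlMr //.
move: h. set x := (2:R) ^+ T. have -> : (3%N%:R : R) = 3 by []. lra.
Qed.

Lemma fin1 (T : nat) (q Y : R) : (0 < T)%N -> 1/4 <= q -> T%:R / 32 <= Y ->
  (1/640) / Num.sqrt T%:R <= (T%:R)^-1 * (q * (Y / 2)).
Proof.
move=> T0 hq hY.
have hT : 1 <= (T%:R : R) by rewrite ler1n.
have hs : 1 <= Num.sqrt (T%:R : R) by rewrite -{1}sqrtr1 ler_sqrt; lra.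
apply: (@le_trans _ _ (1/256)).
  rewrite ler_pdivrMr; last by lra. nra.
have hT0 : (T%:R : R) != 0 by rewrite pnatr_eq0 -lt0n.
have -> : (1/256 : R) = (T%:R)^-1 * (T%:R / 256) by field.
apply: ler_wpM2l; first by rewrite invr_ge0; lra.
nra.
Qed.

Lemma fin2 (T : nat) (q Y : R) : (0 < T)%N -> 1/4 <= q -> Num.sqrt T%:R / 80 <= Y ->
  (1/640) / Num.sqrt T%:R <= (T%:R)^-1 * (q * (Y / 2)).
Proof.
move=> T0 hq hY.
have hT : 1 <= (T%:R : R) by rewrite ler1n.
set s := Num.sqrt (T%:R : R) in hY *.
have hs : 1 <= s by rewrite -{1}sqrtr1 ler_sqrt; lra.
have e : (T%:R : R) = s ^+ 2 by rewrite sqr_sqrtr //; lra.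
have hs0 : s != 0 by apply/negP => /eqP h; lra.
have -> : (1/640) / s = (T%:R)^-1 * (s / 640) by rewrite e; field.
apply: ler_wpM2l; first by rewrite invr_ge0; lra.
have hY0 : 0 <= Y by lra.
nra.
Qed.
End S.
Arguments cnt {T}.

Lemma cnt_le T (k : {ffun 'I_T -> 'I_2}) : (cnt k <= T)%N.
Proof.
have : (cnt k <= \sum_(t < T) 1)%N by apply: leq_sum => t _; exact: leq_b1.
by rewrite sum_nat_const card_ord muln1.
Qed.

Theorem lemma8p2 (R : realType) :
  exists c : R, 0 < c /\
  exists D : findist R, is_dist D /\ calibrated D /\
  exists (A : finType) (U : A -> bool -> R),
    (0 < #|A|)%N /\ (forall a y, 0 <= U a y <= 1) /\
    forall (T : nat), (0 < T)%N ->
    forall r : R -> {ffun A -> R},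
      (forall p, 0 <= p <= 1 -> is_pvec (r p)) ->
      1 / 3 <= sample_prob D T
                 (fun s => c / Num.sqrt (T%:R) <= swap_regret U r s).
Proof.
exists (1/640); split; first lra.
exists (Dd R); split.
  split; first by move=> i /=; rewrite invr_ge0; lra.
  split; first by rewrite big_ord_recr big_ord1 /=; lra.
  by move=> i /=; lra.
split.
  move=> q /=. case: (eqVneq (2^-1 : R) q) => [<-|ne].
    rewrite big_mkcond [X in _ = _ * X]big_mkcond !big_ord_recr !big_ord0 /=. lra.
  by rewrite !big_pred0_eq mulr0.
exists ('I_4 : finType). exists (UU R). split; first by rewrite card_ord.
split.
  move=> a y. have ha : (a%:R : R) <= 3 by rewrite ler_nat; have := ltn_ord a; lia.
  have ha0 : (0 : R) <= a%:R by [].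
  rewrite /UU /vv. case: y => /=; apply/andP; split; nra.
move=> T T0 r hr.
have [hq0 hq1] : is_pvec (r (2^-1)) by apply: hr; lra.
set q := r (2^-1) in hq0 hq1 *.
have [a ha] : exists a : 'I_4, 1/4 <= q a.
  case: (boolP [exists a, 1/4 <= q a]) => [/existsP //|/existsPn h].
  exfalso.
  have : \sum_(a : 'I_4) q a < \sum_(a : 'I_4) (1/4 : R).
    apply: ltr_sum; first by apply/hasP; exists ord0; rewrite ?mem_index_enum.
    by move=> i _; rewrite ltNge h.
  rewrite hq1 sumr_const card_ord -mulr_natl. lra.
have hT1 : (1 : R) <= T%:R by rewrite ler1n.
set s := Num.sqrt (T%:R : R).
have hs0 : 0 <= s by apply: sqrtr_ge0.
have es : s ^+ 2 = T%:R by rewrite sqr_sqrtr //; lra.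
set x := s / 10.
have hx0 : 0 <= x by rewrite /x; lra.
set K := (Num.truncn x).+1.
have hK0 : (0 < K)%N by [].
have hKa : (100 * (K - 1) ^ 2 <= T)%N.
  rewrite /K subSS subn0 -(ler_nat R) natrM natrX.
  have ht : ((Num.truncn x)%:R : R) <= x by rewrite truncn_le.
  have ht0 : (0 : R) <= (Num.truncn x)%:R by [].
  rewrite /x in ht. nra.
have hKb : (T < 100)%N -> K = 1%N.
  move=> hl. rewrite /K. congr S. apply/eqP. rewrite -leqn0 truncn_le_nat.
  have : (T%:R : R) < 100 by rewrite ltr_nat.
  rewrite /x. nra.
have hKc : x <= K%:R by apply: ltW; rewrite /K; exact: truncnS_gt.
have hn := @cnt_le T.
case: a ha => [[|[|[|[|//]]]] Ha] ha.
-
  apply: (le_trans (@conv R T (fun j => (T <= j.*2)%N) _)).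
    apply: leq_trans (halfprob T) _. rewrite leq_mul2r; apply/orP; right; done.
  apply: (@sp_ge R T _ (fun j => (T <= j.*2)%N)) => k hk.
  apply: le_trans _ (@regret_ge R T r k (Ordinal Ha) (Ordinal (isT : (1 < 4)%N))).
  apply: fin1 => //.
  have hk' : (T%:R : R) <= 2 * (cnt k)%:R by rewrite -mul2n -(ler_nat R) natrM in hk.
  rewrite /vv /=. lra.
-
  apply: (le_trans (@conv R T (fun j => (T + K <= j.*2) || ((4 * j <= T) && (T <= 4)))%N _)).
    exact: p1prob.
  apply: (@sp_ge R T _ (fun j => (T + K <= j.*2) || ((4 * j <= T) && (T <= 4)))%N) => k /orP [hk|/andP [hk _]].
  + apply: le_trans _ (@regret_ge R T r k (Ordinal Ha) (Ordinal (isT : (2 < 4)%N))).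
    apply: fin2 => //.
    have hk' : (T%:R : R) + K%:R <= 2 * (cnt k)%:R by rewrite -mul2n -(ler_nat R) natrD natrM in hk.
    rewrite /vv /= -/s. rewrite /x in hKc. lra.
  + apply: le_trans _ (@regret_ge R T r k (Ordinal Ha) (Ordinal (isT : (0 < 4)%N))).
    apply: fin1 => //.
    have hk' : 4 * (cnt k)%:R <= (T%:R : R) by rewrite -(ler_nat R) natrM in hk.
    rewrite /vv /=. lra.
-
  apply: (le_trans (@conv R T (fun j => (T + K <= (T - j).*2) || ((4 * (T - j) <= T) && (T <= 4)))%N _)).
    rewrite (symsum T (fun j => ((T + K <= j.*2) || ((4 * j <= T) && (T <= 4)))%N : nat)).
    exact: p1prob.
  apply: (@sp_ge R T _ (fun j => (T + K <= (T - j).*2) || ((4 * (T - j) <= T) && (T <= 4)))%N) => k /orP [hk|/andP [hk _]].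
  + have hk2 : ((cnt k).*2 + K <= T)%N by have := hn k; lia.
    apply: le_trans _ (@regret_ge R T r k (Ordinal Ha) (Ordinal (isT : (1 < 4)%N))).
    apply: fin2 => //.
    have hk' : 2 * (cnt k)%:R + K%:R <= (T%:R : R) by rewrite -mul2n -(ler_nat R) natrD natrM in hk2.
    rewrite /vv /= -/s. rewrite /x in hKc. lra.
  + have hk2 : (3 * T <= 4 * cnt k)%N by have := hn k; lia.
    apply: le_trans _ (@regret_ge R T r k (Ordinal Ha) (Ordinal (isT : (3 < 4)%N))).
    apply: fin1 => //.
    have hk' : 3 * (T%:R : R) <= 4 * (cnt k)%:R by rewrite -(ler_nat R) !natrM in hk2.
    rewrite /vv /=. lra.
-
  apply: (le_trans (@conv R T (fun j => (T <= (T - j).*2)%N) _)).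
    rewrite (symsum T (fun j => (T <= j.*2)%N : nat)).
    apply: leq_trans (halfprob T) _. rewrite leq_mul2r; apply/orP; right; done.
  apply: (@sp_ge R T _ (fun j => (T <= (T - j).*2)%N)) => k hk.
  have hk2 : ((cnt k).*2 <= T)%N by have := hn k; lia.
  apply: le_trans _ (@regret_ge R T r k (Ordinal Ha) (Ordinal (isT : (2 < 4)%N))).
  apply: fin1 => //.
  have hk' : 2 * (cnt k)%:R <= (T%:R : R) by rewrite -mul2n -(ler_nat R) natrM in hk2.
  rewrite /vv /=. lra.
Qed.
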